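(* Let $\mathit{pts}_1,\ldots,\mathit{pts}_n \in \mathit{PTS}$ be points-to types and let $q_1,\ldots,q_n \in [0,1]$ satisfy $q_1+\cdots+q_n \le 1$. Then the map $\nabla((\mathit{pts}_1,q_1),\ldots,(\mathit{pts}_n,q_n)) : \mathit{Var} \to 2^{\mathit{Addrs}_p}$ is a points-to type, i.e. it belongs to $\mathit{PTS}$.
   Context: $\mathit{Var}$ is a finite set of program variables. $\mathit{Addrs}=\{x' \mid x\in\mathit{Var}\}$ is a set of symbolic addresses (one per variable) and $\mathit{Addrs}_p=\mathit{Addrs}\times[0,1]$. $\textit{Pre-PTS}$ is the set of maps $\mathit{pts}:\mathit{Var}\to 2^{\mathit{Addrs}_p}$ such that for all $x,y\in\mathit{Var}$, if $(y',p_1),(y',p_2)\in\mathit{pts}(x)$ then $p_1=p_2$. For $\mathit{pts}\in\textit{Pre-PTS}$ and $x\in\mathit{Var}$, $\sum_{\mathit{pts}} x=\sum_{(z',p)\in\mathit{pts}(x)} p$ and $A_{\mathit{pts}}(x)=\{z'\mid \exists p>0.\ (z',p)\in\mathit{pts}(x)\}$. The set of points-to types is $\mathit{PTS}=\{\mathit{pts}\in\textit{Pre-PTS}\mid \forall x\in\mathit{Var}.\ \sum_{\mathit{pts}} x\le 1\}$. For $\mathit{pts}_1,\ldots,\mathit{pts}_n\in\mathit{PTS}$ and weights $q_1,\ldots,q_n\in[0,1]$ with sum $\le 1$, the map $\nabla((\mathit{pts}_1,q_1),\ldots,(\mathit{pts}_n,q_n))$ is defined by $\nabla((\mathit{pts}_1,q_1),\ldots,(\mathit{pts}_n,q_n))(x)=\{(z',p)\mid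 (\exists i.\ z'\in A_{\mathit{pts}_i}(x))\wedge p=\sum_{k:\ (z',p_k)\in\mathit{pts}_k(x)} q_k\, p_k\}$. *)

(* Defs.v *)
From mathcomp Require Import all_boot all_order all_algebra.
From mathcomp Require Import all_classical all_reals.
Set Implicit Arguments. Unset Strict Implicit. Unset Printing Implicit Defensive.
Import Order.TTheory GRing.Theory Num.Theory.
Local Open Scope classical_set_scope.
Local Open Scope ring_scope.

(* Var is a finite type of program variables; the symbolic address x' of a
   variable x is represented by x itself, so Addrs = Var and
   Addrs_p = Var * [0,1] (elements (z, p) of Var * R with 0 <= p <= 1). *)

Definition pts_map (R : realType) (Var : finType) := Var -> set (Var * R).

Definition prePTS (R : realType) (Var : finType) (pts : pts_map R Var) : Prop :=
  (forall x zp, pts x zp -> 0 <= zp.2 <= 1) /\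
  (forall x y p1 p2, pts x (y, p1) -> pts x (y, p2) -> p1 = p2).

Definition sum_pts (R : realType) (Var : finType) (pts : pts_map R Var) (x : Var) : R :=
  \sum_(zp \in pts x) zp.2.

Definition A_pts (R : realType) (Var : finType) (pts : pts_map R Var) (x : Var) : set Var :=
  [set z | exists p, 0 < p /\ pts x (z, p)].

Definition PTS (R : realType) (Var : finType) (pts : pts_map R Var) : Prop :=
  prePTS pts /\ forall x, sum_pts pts x <= 1.

Definition nabla (R : realType) (Var : finType) (n : nat)
  (pts_ : 'I_n -> pts_map R Var) (q : 'I_n -> R) : pts_map R Var :=
  fun x => [set zp | (exists i, A_pts (pts_ i) x zp.1) /\
     zp.2 = \sum_(kp \in [set kp : 'I_n * R | pts_ kp.1 x (zp.1, kp.2)]) (q kp.1 * kp.2)].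

(* Main.v *)
Require Import Defs.
From mathcomp Require Import all_boot all_order all_algebra.
From mathcomp Require Import all_classical all_reals.
Import Order.TTheory GRing.Theory Num.Theory.
Local Open Scope classical_set_scope.
Local Open Scope ring_scope.

Set Implicit Arguments.
Section G.
Variables (R : realType) (T : finType).

Definition fv (A : set (T * R)) (z : T) : R := xget 0 [set p | A (z, p)].

Definition functional (A : set (T * R)) :=
  forall z p1 p2, A (z, p1) -> A (z, p2) -> p1 = p2.

Lemma fv_eq A z p : functional A -> A (z, p) -> fv A z = p.
Proof.
move=> fA Azp; rewrite /fv; case: xgetP => [x _ Ax|/(_ p)//].
exact: fA Ax Azp.
Qed.

Arguments fv_eq {A z p}.
Lemma fv_out A z : ~ (exists p, A (z, p)) -> fv A z = 0.
Proof.
move=> h; rewrite /fv; case: xgetP => // x _ Ax; exfalso; apply: h; by exists x.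
Qed.

Lemma graph_sum (A : set (T * R)) (F : T * R -> R) : functional A ->
  \sum_(zp \in A) F zp =
  \sum_(z | `[< exists p, A (z, p) >]) F (z, fv A z).
Proof.
move=> fA.
have eA : A = (fun z => (z, fv A z)) @` [set z | exists p, A (z, p)].
  apply/seteqP; split => [[z p] Azp|_ [z [p Azp] <-]].
    by exists z; [exists p | rewrite (fv_eq fA Azp)].
  by rewrite (fv_eq fA Azp).
rewrite [in LHS]eA fsbig_image; last by move=> x y _ _ [].
have -> : \sum_(z | `[< exists p, A (z, p) >]) F (z, fv A z) =
   \sum_(z <- enum T | `[< exists p, A (z, p) >]) F (z, fv A z).
  by rewrite enumT.
rewrite (bigfs _ _ (P := fun z => `[< exists p, A (z, p) >])) ?enum_uniq //.
  by apply: eq_fsbigl; apply/seteqP; split => z /=; rewrite asboolE.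
by move=> i _; rewrite mem_enum.
Qed.
Lemma graph_sum0 (A : set (T * R)) (F : T * R -> R) : functional A ->
  (forall z, F (z, 0) = 0) ->
  \sum_(zp \in A) F zp = \sum_z F (z, fv A z).
Proof.
move=> fA F0; rewrite graph_sum // big_mkcond /=; apply: eq_bigr => z _.
case: asboolP => // h; by rewrite fv_out.
Qed.
End G.
Arguments fv {R T}.
Arguments fv_eq {R T A z p}.
Arguments functional {R T}.

Theorem lemma1 (R : realType) (Var : finType) (n : nat)
  (pts_ : 'I_n -> pts_map R Var) (q : 'I_n -> R) :
  (forall i, PTS (pts_ i)) ->
  (forall i, 0 <= q i <= 1) ->
  \sum_(i < n) q i <= 1 ->
  PTS (nabla pts_ q).
Proof.
move=> H Hq Hs.
have funk k x : functional (pts_ k x).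
  move=> z p1 p2; exact: (proj2 (proj1 (H k))).
have f01 k x z : 0 <= fv (pts_ k x) z <= 1.
  have [[p Hp]|Hn] := pselect (exists p, pts_ k x (z, p)).
    by rewrite (fv_eq (funk k x) Hp); exact: (proj1 (proj1 (H k)) x (z, p) Hp).
  by rewrite fv_out // lexx ler01.
have sumk k x : \sum_z fv (pts_ k x) z <= 1.
  have := proj2 (H k) x; rewrite /sum_pts graph_sum0 //.
have inner x z : \sum_(kp \in [set kp : 'I_n * R | pts_ kp.1 x (z, kp.2)]) (q kp.1 * kp.2)
    = \sum_k q k * fv (pts_ k x) z.
  rewrite (@graph_sum0 _ _ _ (fun kp : 'I_n * R => q kp.1 * kp.2)) //=.
    by move=> k p1 p2; exact: funk.
  by move=> k; rewrite mulr0.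
set g := fun x z => \sum_k q k * fv (pts_ k x) z.
have g0 x z : 0 <= g x z.
  by apply: sumr_ge0 => k _; apply: mulr_ge0; [case/andP: (Hq k) | case/andP: (f01 k x z)].
have g1 x z : g x z <= 1.
  apply: le_trans Hs; apply: ler_sum => k _.
  rewrite -[leRHS]mulr1; apply: ler_wpM2l; [by case/andP: (Hq k)|by case/andP: (f01 k x z)].
have eN x : nabla pts_ q x = [set zp | (exists i, A_pts (pts_ i) x zp.1) /\ zp.2 = g x zp.1].
  by apply/seteqP; split => -[z p] /= [h1 h2]; split => //; rewrite /= in h2; by rewrite h2 ?inner.
have funN x : functional (nabla pts_ q x).
  by rewrite eN => z p1 p2 /= [_ ->] [_ ->].
split; first split.
- move=> x [z p]; rewrite eN /= => -[_ ->]; by rewrite g0 g1.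
- move=> x y p1 p2; exact: funN.
move=> x; rewrite /sum_pts graph_sum0 //.
apply: (@le_trans _ _ (\sum_z g x z)).
  apply: ler_sum => z _.
  have [[p Hp]|Hn] := pselect (exists p, nabla pts_ q x (z, p)).
    rewrite (fv_eq (funN x) Hp); move: Hp; rewrite eN /= => -[_ ->]; exact: lexx.
  by rewrite fv_out.
rewrite /g exchange_big /=.
apply: le_trans Hs; apply: ler_sum => k _.
rewrite -mulr_sumr -[leRHS]mulr1; apply: ler_wpM2l; [by case/andP: (Hq k)|exact: sumk].
Qed.
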